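(* Let $q\ge5$, $\mu\in\mathbb{F}_q\setminus\{0,1\}$, and let $\ell_\mu$ be the line through $\mathbf{P}(0,\mu,0,1)$ and $\mathbf{P}(1,0,1,0)$. Then $\ell_\mu$ is an $\mathcal{E}_{nG}$-line in each of the following cases: (i) $q$ is even; (ii) $q\equiv0\pmod3$; (iii) $q\not\equiv0\pmod3$, $q$ is odd and $\mu\ne1/9$.
   Context: Points of $\mathrm{PG}(3,q)$ are written $\mathbf{P}(x_0,x_1,x_2,x_3)$ over $\mathbb{F}_q$. For $t$ in $\mathbb{F}_q$ or $\mathbb{F}_{q^2}$ put $P(t)=\mathbf{P}(t^3,t^2,t,1)$, $P(\infty)=\mathbf{P}(1,0,0,0)$; the twisted cubic is $\mathscr{C}=\{P(t):t\in\mathbb{F}_q\cup\{\infty\}\}$. The osculating plane $\pi_{osc}(t)$ is $x_0-3tx_1+3t^2x_2-t^3x_3=0$ for finite $t$ and $\pi_{osc}(\infty)$ is $x_3=0$. An imaginary chord is a line of $\mathrm{PG}(3,q)$ joining $P(t_1),P(t_2)$ with $t_1,t_2=t_1^q\in\mathbb{F}_{q^2}\setminus\mathbb{F}_q$; an imaginary axis is a line of $\mathrm{PG}(3,q)$ equal to $\pi_{osc}(t_1)\cap\pi_{osc}(t_2)$ with $t_1,t_2=t_1^q\in\mathbb{F}_{q^2}\setminus\mathbb{F}_q$. An $\mathcal{E}_{nG}$-line is a line of $\mathrm{PG}(3,q)$ with no point on $\mathscr{C}$, not contained in any $\pi_{osc}(t)$, $t\in\mathbb{F}_q\cup\{\infty\}$,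 and which is neither an imaginary chord nor an imaginary axis. *)

(* Defs.v *)
From HB Require Import structures.
From mathcomp Require Import all_boot all_order all_algebra all_field.
Set Implicit Arguments. Unset Strict Implicit. Unset Printing Implicit Defensive.
Import Order.TTheory GRing.Theory.
Local Open Scope ring_scope.

(* Points of PG(3,K) are represented by nonzero row vectors (x0,x1,x2,x3);
   subspaces (lines, planes) by row spaces of matrices (mxalgebra). *)

Definition vec4 (K : nzRingType) (a b c d : K) : 'rV[K]_4 :=
  \row_(i < 4) nth 0 [:: a; b; c; d] i.

Definition Pt (K : nzRingType) (t : K) : 'rV[K]_4 := vec4 (t ^+ 3) (t ^+ 2) t 1.
Definition Pinf (K : nzRingType) : 'rV[K]_4 := vec4 1 0 0 0.

(* coefficient vectors of osculating planes:
   pi_osc(t) : x0 - 3t x1 + 3t^2 x2 - t^3 x3 = 0 ; pi_osc(oo) : x3 = 0.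
   A point x lies on the plane with coefficient vector c iff x *m c^T = 0. *)
Definition osc (K : nzRingType) (t : K) : 'rV[K]_4 :=
  vec4 1 (- (3%:R * t)) (3%:R * t ^+ 2) (- t ^+ 3).
Definition osc_inf (K : nzRingType) : 'rV[K]_4 := vec4 0 0 0 1.

Definition join (K : nzRingType) (a b : 'rV[K]_4) : 'M[K]_(2, 4) := col_mx a b.

Section Lines.
Variable F : finFieldType.

Definition no_point_on_cubic (A : 'M[F]_(2, 4)) : Prop :=
  (forall t : F, ~~ (Pt t <= A)%MS) /\ ~~ (Pinf F <= A)%MS.

Definition not_in_osc_plane (A : 'M[F]_(2, 4)) : Prop :=
  (forall t : F, A *m (osc t)^T != 0) /\ A *m (osc_inf F)^T != 0.

(* L plays the role of F_{q^2}, iota the embedding F_q -> F_{q^2}. *)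
Definition imaginary_chord (L : finFieldType) (iota : {rmorphism F -> L})
  (A : 'M[F]_(2, 4)) : Prop :=
  exists t1 : L, (forall x : F, iota x != t1) /\
    (map_mx iota A == join (Pt t1) (Pt (t1 ^+ #|F|)))%MS.

(* the intersection of the planes with coefficient vectors c1, c2 is the
   row kernel of the 4x2 matrix [c1; c2]^T *)
Definition imaginary_axis (L : finFieldType) (iota : {rmorphism F -> L})
  (A : 'M[F]_(2, 4)) : Prop :=
  exists t1 : L, (forall x : F, iota x != t1) /\
    (map_mx iota A == kermx (col_mx (osc t1) (osc (t1 ^+ #|F|)))^T)%MS.

Definition EnG_line (A : 'M[F]_(2, 4)) : Prop :=
  no_point_on_cubic A /\ not_in_osc_plane A /\
  forall (L : finFieldType) (iota : {rmorphism F -> L}),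
    #|L| = (#|F| ^ 2)%N -> ~ imaginary_chord iota A /\ ~ imaginary_axis iota A.

Definition ell (mu : F) : 'M[F]_(2, 4) := join (vec4 0 mu 0 1) (vec4 1 0 1 0).

End Lines.

(* Main.v *)
Require Import Defs.
From HB Require Import structures.
From mathcomp Require Import all_boot all_order all_algebra all_field.
From mathcomp Require Import ring.
Import Order.TTheory GRing.Theory.
Local Open Scope ring_scope.

Lemma char_div (F : finFieldType) (r : nat) : prime r -> (r %| #|F|)%N -> (r%:R : F) = 0.
Proof.
move=> pr dv.
have [p pp pch] := finPcharP F.
have := card_pprimeChar pch => /= E.
move: dv; rewrite E Euclid_dvdX // => /andP[dv _].
move: dv; rewrite dvdn_prime2 // => /eqP ->.
exact: (pcharf0 pch).
Qed.

Lemma rowdot (K : fieldType) (a b c d x y z w : K) :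
  (vec4 a b c d *m (vec4 x y z w)^T) 0 0 = a * x + b * y + c * z + d * w.
Proof. by rewrite !mxE !big_ord_recl big_ord0 /= !mxE /= addr0 !addrA. Qed.

Lemma join_mul (K : fieldType) n (a b : 'rV[K]_4) (C : 'M[K]_(4, n)) :
  join a b *m C = 0 -> a *m C = 0 /\ b *m C = 0.
Proof.
move=> H; have := mul_col_mx a b C.
rewrite [_ *m _]H => /esym/eqP; rewrite col_mx_eq0 => /andP[/eqP -> /eqP ->]; done.
Qed.

Lemma key (K : fieldType) (m t : K) :
  join (vec4 0 m 0 1) (vec4 1 0 1 0) *m (osc t)^T = 0 -> 9%:R * m = 1.
Proof.
move/join_mul=> [H1 H2].
have E1 := congr1 (fun M : 'M[K]_1 => M 0 0) H1.
have E2 := congr1 (fun M : 'M[K]_1 => M 0 0) H2.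
move: E1 E2.
rewrite /osc !rowdot !mxE => E1 E2.
have ht : t != 0 by apply/eqP=> t0; move: E2; rewrite t0; rewrite expr0n /= !mul0r !mulr0 !addr0 mulr1 => /eqP; rewrite oner_eq0.
have F : t * (t ^+ 2 + 3%:R * m) = - (0 * 1 + m * - (3 * t) + 0 * (3 * t ^+ 2) + 1 * - t ^+ 3) by ring.
rewrite E1 oppr0 in F.
move/eqP: F; rewrite mulf_eq0 (negPf ht) /= => /eqP F.
apply/eqP; rewrite -subr_eq0; apply/eqP.
have -> : 9%:R * m - 1 = 3%:R * (t ^+ 2 + 3%:R * m) - (1 * 1 + 0 * - (3 * t) + 1 * (3 * t ^+ 2) + 0 * - t ^+ 3) :> K by ring.
by rewrite F E2 mulr0 subr0.
Qed.

Lemma joinE (K : fieldType) (a b : 'rV[K]_4) (i : 'I_2) j :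
  join a b i j = if (i == 0 :> nat) then a 0 j else b 0 j.
Proof. by rewrite /join mxE; case: splitP => k /= ->; rewrite ord1. Qed.

Lemma pt_in (K : fieldType) (m : K) (v : 'rV[K]_4) :
  (v <= join (vec4 0 m 0 1) (vec4 1 0 1 0))%MS ->
  v 0 0 = v 0 2%:R /\ v 0 1 = m * v 0 3%:R.
Proof.
case/submxP=> D ->.
rewrite !mxE !big_ord_recl !big_ord0 /= !joinE /= !mxE /=.
by split; ring.
Qed.

Lemma map_ell (F : finFieldType) (L : fieldType) (iota : {rmorphism F -> L}) (mu : F) :
  map_mx iota (ell mu) = join (vec4 0 (iota mu) 0 1) (vec4 1 0 1 0).
Proof.
apply/matrixP=> i j; rewrite mxE /ell !joinE.
case: (i == 0 :> nat); rewrite !mxE; case: j => [[|[|[|[|j]]]] Hj] //=;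
  by rewrite ?rmorph0 ?rmorph1.
Qed.

Lemma cube (K : fieldType) (t : K) : t ^+ 3 = t -> [\/ t = 0, t = 1 | t = -1].
Proof.
move=> E.
have e : t * ((t - 1) * (t + 1)) = t ^+ 3 - t by ring.
have : t * ((t - 1) * (t + 1)) == 0 by rewrite e E subrr.
rewrite !mulf_eq0 subr_eq0 addr_eq0 => /orP[/eqP->|/orP[]/eqP->]; [exact: Or31|exact: Or32|exact: Or33].
Qed.

Lemma cubic_pt (K : fieldType) (m t : K) :
  (Pt t <= join (vec4 0 m 0 1) (vec4 1 0 1 0))%MS -> [\/ t = 0, t = 1 | t = -1] /\ t ^+ 2 = m.
Proof.
move/pt_in; rewrite !mxE /= mulr1 => -[E1 E2]; split => //; exact: cube.
Qed.

Lemma nine (F : finFieldType) (mu : F) : mu != 0 -> mu != 1 ->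
  [\/ ~~ odd #|F|,
      (#|F| %% 3 == 0)%N
    | [/\ (#|F| %% 3 != 0)%N, odd #|F| & mu != (9%:R)^-1] ] ->
  9%:R * mu != 1.
Proof.
move=> m0 m1 [Ho|H3|[_ _ H9]]; apply/eqP => E.
- have h2 : (2%:R : F) = 0 by apply: char_div => //; rewrite dvdn2 (negPf Ho).
  have : (9%:R : F) = 1 by rewrite (natrD _ 1 8) (natrM _ 2 4) h2 mul0r addr0.
  by move=> h; rewrite h mul1r in E; rewrite E eqxx in m1.
- have h3 : (3%:R : F) = 0 by apply: char_div => //; apply/dvdnP; exists (#|F| %/ 3)%N; rewrite (divn_eq #|F| 3) (eqP H3) addn0 mulnK.
  have : (9%:R : F) = 0 by rewrite (natrM _ 3 3) h3 mul0r.
  by move=> h; move: E; rewrite h mul0r => /eqP; rewrite eq_sym oner_eq0.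
- have n9 : (9%:R : F) != 0 by apply/eqP=> h; move: E; rewrite h mul0r => /eqP; rewrite eq_sym oner_eq0.
  have : (9%:R : F)^-1 * (9%:R * mu) = mu by rewrite mulKf.
  by rewrite E mulr1 => h; rewrite h eqxx in H9.
Qed.

Theorem lemma4p4 (F : finFieldType) (mu : F) :
  (5 <= #|F|)%N -> mu != 0 -> mu != 1 ->
  [\/ ~~ odd #|F|,
      (#|F| %% 3 == 0)%N
    | [/\ (#|F| %% 3 != 0)%N, odd #|F| & mu != (9%:R)^-1] ] ->
  EnG_line (ell mu).
Proof.
move=> _ m0 m1 Hc.
have N9 := @nine F mu m0 m1 Hc.
split; [split|split; [split|]].
- move=> t; apply/negP => /cubic_pt [Ht E].
  case: Ht => ht; subst t mu.
  + by rewrite expr0n eqxx in m0.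
  + by rewrite expr1n eqxx in m1.
  + by rewrite sqrrN expr1n eqxx in m1.
- apply/negP => /pt_in; rewrite !mxE /= mulr0 => -[E _].
  by move/eqP: E; rewrite oner_eq0.
- move=> t; apply/negP => /eqP /key E.
  by rewrite E eqxx in N9.
- apply/negP => /eqP /join_mul [H1 _].
  have E1 := congr1 (fun M : 'M[F]_1 => M 0 0) H1.
  move: E1; rewrite /osc_inf rowdot mxE !mul0r !mulr0 !add0r mulr1 => /eqP.
  by rewrite oner_eq0.
- move=> L iota _; split.
  + case=> t1 [Hn /andP[_ Hs]].
    have : (Pt t1 <= join (Pt t1) (Pt (t1 ^+ #|F|)))%MS.
      have h2 : (col_mx (Pt t1) (Pt (t1 ^+ #|F|)) <= join (Pt t1) (Pt (t1 ^+ #|F|)))%MS := submx_refl _.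
      by move: h2; rewrite col_mx_sub => /andP[].
    move=> /submx_trans /(_ Hs); rewrite map_ell => /cubic_pt [Ht _].
    case: Ht => ht.
    * by move: (Hn 0); rewrite rmorph0 ht eqxx.
    * by move: (Hn 1); rewrite rmorph1 ht eqxx.
    * by move: (Hn (-1)); rewrite rmorphN1 ht eqxx.
  + case=> t1 [Hn /andP[Hs _]].
    move: Hs; rewrite sub_kermx tr_col_mx mul_mx_row row_mx_eq0 => /andP[/eqP H _].
    move: H; rewrite map_ell => /key E.
    have : iota (9%:R * mu) = iota 1 by rewrite rmorphM rmorph_nat rmorph1.
    by move/fmorph_inj => E'; rewrite E' eqxx in N9.
Qed.
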